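(* Under the standing setup, $e(U)\geq 4$; in particular $G^\ast[U]$ has at least one non-trivial component.
   Context: Standing setup: Let $m\geq 88$. Let $\mathcal{G}(m,F_6)$ be the set of $F_6$-free graphs with exactly $m$ edges and no isolated vertices, where $F_6=K_1\vee P_5$ (a vertex joined to every vertex of a path on 5 vertices). Let $G^\ast\in\mathcal{G}(m,F_6)$ have the maximum spectral radius among all graphs in $\mathcal{G}(m,F_6)$; $G^\ast$ is connected. Let $\lambda=\lambda(G^\ast)$ be its spectral radius and $\mathbf{x}$ its Perron vector (positive unit eigenvector for $\lambda$), with entry $x_v$ at vertex $v$. Let $u^\ast$ be a vertex with $x_{u^\ast}=\max_v x_v$. Set $U=N_{G^\ast}(u^\ast)$ and $W=V(G^\ast)\setminus N_{G^\ast}[u^\ast]$. For $X,Y\subseteq V(G^\ast)$, $e(X,Y)$ is the number of edges with one end in $X$ and the other in $Y$, and $e(X)$ is the number of edges inside $X$. *)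

(* Defs.v *)
From HB Require Import structures.
From mathcomp Require Import all_boot all_order all_algebra.
From mathcomp Require Import reals.
Set Implicit Arguments. Unset Strict Implicit. Unset Printing Implicit Defensive.
Import Order.TTheory GRing.Theory Num.Theory.
Local Open Scope ring_scope.

Definition simple_graph (n : nat) (e : rel 'I_n) : Prop :=
  (forall x y, e x y = e y x) /\ (forall x, ~~ e x x).

Definition num_edges (n : nat) (e : rel 'I_n) : nat :=
  #|[set p : 'I_n * 'I_n | e p.1 p.2 && (p.1 < p.2)%N]|.

Definition edges_in (n : nat) (e : rel 'I_n) (X : {set 'I_n}) : nat :=
  #|[set p : 'I_n * 'I_n | [&& p.1 \in X, p.2 \in X, e p.1 p.2 & (p.1 < p.2)%N]]|.

Definition no_isolated (n : nat) (e : rel 'I_n) : Prop :=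
  forall v, exists w, e v w.

(* G contains F_6 = K_1 \/ P_5 as a (not necessarily induced) subgraph:
   a vertex c and a path a1 a2 a3 a4 a5, all six distinct, c adjacent to all ai. *)
Definition contains_F6 (n : nat) (e : rel 'I_n) : Prop :=
  exists c a1 a2 a3 a4 a5 : 'I_n,
    uniq [:: c; a1; a2; a3; a4; a5] /\
    [/\ e c a1, e c a2, e c a3, e c a4 & e c a5] /\
    [/\ e a1 a2, e a2 a3, e a3 a4 & e a4 a5].

Definition in_GmF6 (m n : nat) (e : rel 'I_n) : Prop :=
  [/\ simple_graph e, num_edges e = m, no_isolated e & ~ contains_F6 e].

Definition adjmx (R : realType) (n : nat) (e : rel 'I_n) : 'M[R]_n :=
  \matrix_(i, j) (e i j)%:R.

Definition spectral_radius (R : realType) (n : nat) (e : rel 'I_n) (lam : R) : Prop :=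
  eigenvalue (adjmx R e) lam /\ forall mu, eigenvalue (adjmx R e) mu -> mu <= lam.

Definition perron_vector (R : realType) (n : nat) (e : rel 'I_n) (lam : R)
  (x : 'cV[R]_n) : Prop :=
  [/\ adjmx R e *m x = lam *: x, (forall i, 0 < x i 0) & \sum_i (x i 0) ^+ 2 = 1].

Definition nbhd (n : nat) (e : rel 'I_n) (u : 'I_n) : {set 'I_n} := [set v | e u v].

(* Main.v *)
Require Import Defs.
From HB Require Import structures.
From mathcomp Require Import all_boot all_order all_algebra.
From mathcomp Require Import reals.
From mathcomp Require Import zify ring lra.
Set Implicit Arguments. Unset Strict Implicit. Unset Printing Implicit Defensive.
Import Order.TTheory GRing.Theory Num.Theory.
Local Open Scope ring_scope.

Lemma card_pairs n (P : 'I_n -> 'I_n -> bool) :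
  #|[set p : 'I_n * 'I_n | P p.1 p.2]| = (\sum_i \sum_j (P i j : nat))%N.
Proof.
rewrite cardE -sum1_size big_enum /= big_mkcond /=.
rewrite (eq_bigr (fun p : 'I_n * 'I_n => (P p.1 p.2 : nat))); last first.
  by move=> p _; rewrite inE; case: (P _ _).
by rewrite -(pair_big xpredT xpredT (fun i j => (P i j : nat))).
Qed.

Lemma deg_bound n (e : rel 'I_n) (u : 'I_n) : simple_graph e ->
  (\sum_v \sum_w ((e u v && e v w) : nat) <= num_edges e + edges_in e (nbhd e u))%N.
Proof.
case=> sym irr.
rewrite /num_edges /edges_in (card_pairs (fun i j => e i j && (i < j)%N)).
rewrite (card_pairs (fun i j => [&& i \in nbhd e u, j \in nbhd e u, e i j & (i < j)%N])) -big_split /=.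
have E1 : (\sum_v \sum_w ((e u v && e v w) : nat) =
   \sum_v \sum_w ((e u v && e v w && (v < w)%N) : nat)
   + \sum_v \sum_w ((e u v && e v w && (w < v)%N) : nat))%N.
  rewrite -big_split; apply: eq_bigr => v _.
  rewrite -big_split; apply: eq_bigr => w _.
  case: (ltngtP v w) => H.
  - by rewrite /= ?andbT ?andbF ?addn0.
  - by rewrite /= ?andbT ?andbF ?addn0.
  - have vw : v = w by apply: val_inj.
    by subst; rewrite (negbTE (irr w)) !andbF.
have E2 : (\sum_v \sum_w ((e u v && e v w && (w < v)%N) : nat) =
   \sum_v \sum_w ((e u w && e v w && (v < w)%N) : nat))%N.
  rewrite exchange_big /=; apply: eq_bigr => v _; apply: eq_bigr => w _.
  by rewrite (sym w v).
rewrite E1 E2 -big_split /=.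
apply: leq_sum => v _; rewrite -!big_split /=; apply: leq_sum => w _.
rewrite !inE.
by case: (e u v); case: (e v w); case: (e u w); case: (v < w)%N.
Qed.

Lemma lam_sq_bound (R : realType) n (e : rel 'I_n) (lam : R) (x : 'cV[R]_n) u :
  adjmx R e *m x = lam *: x -> (forall i, 0 < x i 0) -> (forall v, x v 0 <= x u 0) ->
  lam ^+ 2 <= (\sum_v \sum_w ((e u v && e v w) : nat))%:R.
Proof.
move=> H xpos xmax.
have Ei : forall i, \sum_j (e i j)%:R * x j 0 = lam * x i 0.
  move=> i; move/matrixP: H => /(_ i 0); rewrite !mxE => <-.
  by apply: eq_bigr => j _; rewrite mxE.
have xu0 := xpos u.
rewrite -(ler_pM2r xu0).
have -> : lam ^+ 2 * x u 0 = \sum_v (e u v)%:R * \sum_w (e v w)%:R * x w 0.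
  rewrite expr2 -mulrA -Ei mulr_sumr; apply: eq_bigr => v _.
  by rewrite mulrCA Ei.
rewrite natr_sum mulr_suml; apply: ler_sum => v _.
rewrite natr_sum !mulr_suml mulr_sumr; apply: ler_sum => w _.
rewrite mulrA -natrM mulnb.
by apply: ler_wpM2l => //; rewrite ler0n.
Qed.

Lemma eig_le (R : realType) n (A : 'M[R]_n) (y : 'rV[R]_n) (mu a : R) :
  (forall i j, 0 <= A i j) -> (forall i, 0 < y 0 i) ->
  (forall j, \sum_i y 0 i * A i j <= mu * y 0 j) -> eigenvalue A a -> a <= mu.
Proof.
move=> Apos ypos Hy /eigenvalueP [v Hv vn0].
have [i0 Hi0] : exists i, v 0 i != 0.
  case: (pickP (fun i => v 0 i != 0)) => [i Hi|H]; first by exists i.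
  case/negP: vn0; apply/eqP/rowP => i; rewrite mxE.
  by move: (H i) => /negbFE/eqP.
pose r i := `|v 0 i| / y 0 i.
case: (@arg_maxP _ _ _ i0 xpredT r isT) => j _ Hj.
have yj := ypos j.
have rpos : 0 < r j.
  apply: lt_le_trans (Hj i0 isT); rewrite /r divr_gt0 //.
  by rewrite normr_gt0.
have vj : `|v 0 j| = r j * y 0 j by rewrite /r divfK // gt_eqF.
have vjpos : 0 < `|v 0 j| by rewrite vj mulr_gt0.
have Ej : a * v 0 j = \sum_i v 0 i * A i j.
  by move/rowP: Hv => /(_ j); rewrite !mxE => <-.
have : `|a| * `|v 0 j| <= mu * `|v 0 j|.
  rewrite -normrM Ej.
  apply: (le_trans (ler_norm_sum _ _ _)).
  apply: (@le_trans _ _ (\sum_i r j * (y 0 i * A i j))).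
    apply: ler_sum => i _; rewrite normrM (ger0_norm (Apos i j)) mulrA.
    apply: ler_wpM2r => //.
    by have := Hj i isT; rewrite /r /= ler_pdivrMr.
  by rewrite -mulr_sumr vj mulrCA; apply: ler_wpM2l => //; apply: ltW.
rewrite ler_pM2r // => Ha.
exact: le_trans (ler_norm a) Ha.
Qed.

Lemma sum_ord_iota (V : nmodType) n (F : nat -> V) :
  \sum_(i < n) F i = \sum_(a <- iota 0 n) F a.
Proof. by rewrite -(big_mkord xpredT) /index_iota subn0. Qed.

Lemma sum_iota_const (V : nmodType) m l (c : V) (F : nat -> V) :
  (forall b, (m <= b < m + l)%N -> F b = c) -> \sum_(b <- iota m l) F b = c *+ l.
Proof.
elim: l m => [|l IH] m H; first by rewrite big_nil.
rewrite /= big_cons IH ?mulrS ?H //; try lia.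
move=> b Hb; apply: H; lia.
Qed.

Lemma sum_split (V : nmodType) k (p : bool) (F : nat -> V) :
  \sum_(b <- iota 0 (k + 2 + 2 * p)) F b =
  F 0%N + F 1%N + \sum_(b <- iota 2 k) F b + (if p then F (k + 2)%N + F (k + 3)%N else 0).
Proof.
rewrite (_ : (k + 2 + 2 * p = 2 + k + 2 * p)%N); last lia.
rewrite !iotaD !big_cat /= !big_cons big_nil addr0 addrA.
case: p => /=; last by rewrite big_nil !addr0.
rewrite !big_cons !big_nil !addr0 -addrA.
have -> : (0 + (2 + k) + 1 = k + 3)%N by lia.
by have -> : (0 + (2 + k) = k + 2)%N by lia.
Qed.

Definition bk (k a b : nat) : bool := ([|| (a < 2) && (b < 2) && (a != b),
  (a < 2) && (2 <= b) && (b < k + 2), (b < 2) && (2 <= a) && (a < k + 2) |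
  (k + 2 <= a) && (k + 2 <= b) && (a != b)])%N.

Definition bkg k (p : bool) : rel 'I_(k + 2 + 2 * p) := fun i j => bk k i j.

Arguments bkg : clear implicits.

Definition gk k a b : nat := (bk k a b && (a < b))%N.

Lemma bk_sym k a b : bk k a b = bk k b a.
Proof. rewrite /bk; apply/idP/idP; lia. Qed.

Lemma bk_irr k a : bk k a a = false.
Proof. apply/negP; rewrite /bk; lia. Qed.

Lemma gk0 k a b : (~~ (bk k a b && (a < b)))%N -> gk k a b = 0%N.
Proof. by rewrite /gk; case: (_ && _). Qed.
Lemma gk1 k a b : (bk k a b && (a < b))%N -> gk k a b = 1%N.
Proof. by rewrite /gk => ->. Qed.

Lemma row_zero k (p : bool) a : (forall b, (b < k + 2 + 2 * p)%N -> gk k a b = 0%N) ->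
  \sum_(b <- iota 0 (k + 2 + 2 * p)) gk k a b = 0%N.
Proof. by move=> H; rewrite big1_seq // => b; rewrite mem_iota => /andP [_ Hb]; rewrite H. Qed.

Lemma row0 k (p : bool) : \sum_(b <- iota 0 (k + 2 + 2 * p)) gk k 0 b = k.+1.
Proof.
rewrite sum_split (sum_iota_const (c := 1%N)); last first.
  by move=> b Hb; apply: gk1; rewrite /bk; lia.
rewrite (@gk0 k 0 0) ?(@gk1 k 0 1) ?natn; try (apply/negP; rewrite /bk; lia); try (rewrite /bk; lia).
case: p => /=; last by rewrite ?addr0; lia.
rewrite !gk0; try (apply/negP; rewrite /bk; lia). lia.
Qed.

Lemma row1 k (p : bool) : \sum_(b <- iota 0 (k + 2 + 2 * p)) gk k 1 b = k.
Proof.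
rewrite sum_split (sum_iota_const (c := 1%N)); last first.
  by move=> b Hb; apply: gk1; rewrite /bk; lia.
rewrite (@gk0 k 1 0) ?(@gk0 k 1 1) ?natn; try (apply/negP; rewrite /bk; lia); try (rewrite /bk; lia).
case: p => /=; last by rewrite ?addr0; lia.
rewrite !gk0; try (apply/negP; rewrite /bk; lia). lia.
Qed.

Lemma num_edges_bk k (p : bool) : num_edges (bkg k p) = (2 * k + 1 + p)%N.
Proof.
rewrite /num_edges (card_pairs (fun i j => bkg k p i j && (i < j)%N)).
rewrite (eq_bigr (fun i : 'I__ => \sum_(b <- iota 0 (k + 2 + 2 * p)) gk k i b)); last first.
  by move=> i _; rewrite (sum_ord_iota _ (fun b => gk k i b)).
rewrite (sum_ord_iota _ (fun a => \sum_(b <- iota 0 (k + 2 + 2 * p)) gk k a b)).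
rewrite sum_split row0 row1.
rewrite (@sum_iota_const _ 2 k 0%N (fun a => \sum_(b <- iota 0 (k + 2 + 2 * p)) gk k a b)); last first.
  move=> a Ha; apply: row_zero => b Hb; apply: gk0; apply/negP; rewrite /bk; lia.
case: p => /=; last by rewrite mul0rn !addn0; lia.
rewrite (@row_zero k true (k + 3)); last first.
  move=> b Hb; apply: gk0; apply/negP; rewrite /bk; lia.
rewrite (_ : \sum_(b <- iota 0 (k + 2 + 2 * true)) gk k (k + 2) b = 1%N).
  rewrite mul0rn; lia.
rewrite sum_split (sum_iota_const (c := 0%N)); last first.
  by move=> b Hb; apply: gk0; apply/negP; rewrite /bk; lia.
rewrite (@gk0 k (k+2) 0) ?(@gk0 k (k+2) 1) ?(@gk0 k (k+2) (k+2)) ?(@gk1 k (k+2) (k+3)); try (apply/negP; rewrite /bk; lia); try (rewrite /bk; lia).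
Qed.

Ltac bksimp := repeat match goal with |- context [bk ?k ?a ?b] =>
  first [ rewrite (_ : bk k a b = true); last (rewrite /bk; lia)
        | rewrite (_ : bk k a b = false); last (apply/negP; rewrite /bk; lia) ] end.

Definition fh (R : realType) k (mu t : R) (a : nat) : R :=
  if (a < 2)%N then mu else if (a < k + 2)%N then 2 else t.

Lemma fhk2 (R : realType) k (mu t : R) : fh k mu t (k + 2) = t.
Proof. rewrite /fh. have -> : (k + 2 < 2)%N = false by lia. by rewrite ltnn. Qed.
Lemma fhk3 (R : realType) k (mu t : R) : fh k mu t (k + 3) = t.
Proof. rewrite /fh. have -> : (k + 3 < 2)%N = false by lia. by have -> : (k + 3 < k + 2)%N = false by lia. Qed.

Lemma row_h (R : realType) k (p : bool) (mu t : R) b : (b < k + 2 + 2 * p)%N ->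
  \sum_(a <- iota 0 (k + 2 + 2 * p)) fh k mu t a * (bk k a b)%:R =
  if (b < 2)%N then mu + 2 *+ k else if (b < k + 2)%N then mu + mu else t.
Proof.
move=> Hb.
rewrite sum_split (sum_iota_const (c := 2 * ((b < 2)%N)%:R)); last first.
  move=> a Ha; rewrite /fh (_ : (a < 2)%N = false); last lia.
  rewrite (_ : (a < k + 2)%N = true); last lia.
  by rewrite (_ : bk k a b = (b < 2)%N) //; apply/idP/idP; rewrite /bk; lia.
rewrite fhk2 fhk3.
have -> : fh k mu t 0 = mu by [].
have -> : fh k mu t 1 = mu by [].
case: (ltnP b 2) => Hb2.
  have -> : bk k (k + 2) b = false by apply/negP; rewrite /bk; lia.
  have -> : bk k (k + 3) b = false by apply/negP; rewrite /bk; lia.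
  case: b Hb Hb2 => [|[|b]] Hb Hb2; last lia.
  - have -> : bk k 0 0 = false by apply/negP; rewrite /bk; lia.
    have -> : bk k 1 0 = true by rewrite /bk; lia.
    by case: p Hb => _; rewrite /=; ring.
  - have -> : bk k 0 1 = true by rewrite /bk; lia.
    have -> : bk k 1 1 = false by apply/negP; rewrite /bk; lia.
    by case: p Hb => _; rewrite /=; ring.
case: (ltnP b (k + 2)) => Hbk.
  have -> : bk k (k + 2) b = false by apply/negP; rewrite /bk; lia.
  have -> : bk k (k + 3) b = false by apply/negP; rewrite /bk; lia.
  have -> : bk k 0 b = true by rewrite /bk; lia.
  have -> : bk k 1 b = true by rewrite /bk; lia.
  by case: p Hb => _; rewrite /=; ring.
have -> : bk k 0 b = false by apply/negP; rewrite /bk; lia.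
have -> : bk k 1 b = false by apply/negP; rewrite /bk; lia.
case: p Hb => Hb; last lia.
have [->|->] : b = (k + 2)%N \/ b = (k + 3)%N by lia.
  have -> : bk k (k + 2) (k + 2) = false by apply/negP; rewrite /bk; lia.
  have -> : bk k (k + 3) (k + 2) = true by rewrite /bk; lia.
  by rewrite /=; ring.
have -> : bk k (k + 2) (k + 3) = true by rewrite /bk; lia.
have -> : bk k (k + 3) (k + 3) = false by apply/negP; rewrite /bk; lia.
by rewrite /=; ring.
Qed.

Lemma bk_spec (R : realType) k (p : bool) (mu : R) :
  mu * mu = mu + 2 *+ k -> 1 <= mu -> spectral_radius (bkg k p) mu.
Proof.
move=> Hmu mu1.
have rowE : forall (t : R) (j : 'I_(k + 2 + 2 * p)),
    \sum_(i < k + 2 + 2 * p) fh k mu t i * adjmx R (bkg k p) i j =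
    if (j < 2)%N then mu + 2 *+ k else if (j < k + 2)%N then mu + mu else t.
  move=> t j; rewrite -(row_h mu t (ltn_ord j)) -(sum_ord_iota _ (fun a => fh k mu t a * (bk k a j)%:R)).
  by apply: eq_bigr => i _; rewrite mxE.
split.
  apply/eigenvalueP; exists (\row_j fh k mu 0 j).
    apply/rowP => j; rewrite !mxE.
    rewrite (eq_bigr (fun i : 'I_(k + 2 + 2 * p) => fh k mu 0 i * adjmx R (bkg k p) i j)); last by move=> i _; rewrite mxE.
    rewrite rowE /fh; case: ifP => _; first by rewrite Hmu.
    by case: ifP => _; [ring | ring].
  have H0 : (0 < k + 2 + 2 * p)%N by lia.
  apply/negP => /eqP/rowP/(_ (Ordinal H0)); rewrite !mxE /fh /= => mu0.
  by move: mu1; rewrite mu0 ler10.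
move=> a Ha; apply: (eig_le (y := \row_j fh k mu 1 j) _ _ _ Ha).
- by move=> i j; rewrite mxE ler0n.
- move=> i; rewrite mxE /fh; case: ifP => _; first by apply: lt_le_trans mu1.
  by case: ifP => _.
- move=> j; rewrite (eq_bigr (fun i : 'I_(k + 2 + 2 * p) => fh k mu 1 i * adjmx R (bkg k p) i j)); last by move=> i _; rewrite mxE.
  rewrite rowE mxE /fh; case: ifP => _; first by rewrite Hmu.
  by case: ifP => _; [lra | rewrite mulr1].
Qed.

Lemma bk_case k a b : bk k a b ->
  ((k + 2 <= a)%N && (k + 2 <= b)%N && (a != b)) \/
  ((a < k + 2)%N /\ (b < k + 2)%N /\ (a < 2 \/ b < 2)%N).
Proof. rewrite /bk; lia. Qed.

Lemma uniq6 (c a1 a2 a3 a4 a5 : nat) : uniq [:: c; a1; a2; a3; a4; a5] ->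
  [/\ c != a1, c != a2, a1 != a2, a1 != a3 &
   [/\ a2 != a3, a1 != a4, a1 != a5, a2 != a4 & [/\ a2 != a5, c != a4, c != a5 & a4 != a5]]].
Proof.
rewrite /= !inE !negb_or => H.
repeat match goal with H : is_true (_ && _) |- _ => case/andP: H => ? ? end.
by split.
Qed.

Lemma noF6_nat k (p : bool) (c a1 a2 a3 a4 a5 : nat) :
  (c < k + 2 + 2 * p)%N -> (a1 < k + 2 + 2 * p)%N -> (a2 < k + 2 + 2 * p)%N ->
  uniq [:: c; a1; a2; a3; a4; a5] ->
  bk k c a1 -> bk k c a2 -> bk k c a3 -> bk k c a4 -> bk k c a5 ->
  bk k a1 a2 -> bk k a4 a5 -> False.
Proof.
move=> Hc H1 H2 /uniq6 [u1 u2 u3 u4 [u5 u6 u7 u8 [u9 u10 u11 u12]]] e1 e2 e3 e4 e5 e12 e45.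
have [Hck|Hck] := leqP (k + 2) c.
  case/bk_case: e1 => e1; last by exfalso; move: e1 Hck; clear; lia.
  case/bk_case: e2 => e2; last by exfalso; move: e2 Hck; clear; lia.
  move: Hc H1 H2 e1 e2 u3; clear; case: p; lia.
case/bk_case: e1 => e1; first by move: e1 Hck; clear; lia.
case/bk_case: e2 => e2; first by move: e2 Hck; clear; lia.
case/bk_case: e3 => e3; first by move: e3 Hck; clear; lia.
case/bk_case: e4 => e4; first by move: e4 Hck; clear; lia.
case/bk_case: e5 => e5; first by move: e5 Hck; clear; lia.
case/bk_case: e12 => e12; first by move: e12 e1; clear; lia.
case/bk_case: e45 => e45; first by move: e45 e4; clear; lia.
case: e1 => _ [_ e1]; case: e2 => _ [_ e2]; case: e3 => _ [_ e3].
case: e12 => _ [_ e12]; case: e45 => _ [_ e45].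
have [Hc2|Hc2] := ltnP c 2.
  case: e12 => e12; case: e45 => e45.
  - by move: Hc2 e12 e45 u1 u10 u6; clear; lia.
  - by move: Hc2 e12 e45 u1 u11 u7; clear; lia.
  - by move: Hc2 e12 e45 u2 u10 u8; clear; lia.
  - by move: Hc2 e12 e45 u2 u11 u9; clear; lia.
have f1 : (a1 < 2)%N by move: Hc2 e1; clear; lia.
have f2 : (a2 < 2)%N by move: Hc2 e2; clear; lia.
have f3 : (a3 < 2)%N by move: Hc2 e3; clear; lia.
by move: f1 f2 f3 u3 u4 u5; clear; lia.
Qed.

Lemma bk_in k (p : bool) : in_GmF6 (2 * k + 1 + p) (bkg k p).
Proof.
split.
- by split => [x y|x]; [exact: bk_sym | rewrite /bkg bk_irr].
- exact: num_edges_bk.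
- move=> v.
  have Hv := ltn_ord v.
  have [w [Hw Ew]] : exists w, (w < k + 2 + 2 * p)%N /\ bk k v w.
    have [H1|H1] := ltnP v 2.
      by exists (1 - v)%N; split; [lia | rewrite /bk; lia].
    have [H2|H2] := ltnP v (k + 2).
      by exists 0%N; split; [lia | rewrite /bk; lia].
    have [H3|H3] := eqVneq (v : nat) (k + 2)%N.
      by exists (k + 3)%N; split; [lia | rewrite /bk; lia].
    by exists (k + 2)%N; split; [lia | rewrite /bk; lia].
  by exists (Ordinal Hw).
- move=> [c [a1 [a2 [a3 [a4 [a5 [U [[e1 e2 e3 e4 e5] [e12 e23 e34 e45]]]]]]]]].
  rewrite -(map_inj_uniq val_inj) /= in U.
  exact: (@noF6_nat k p c a1 a2 a3 a4 a5 (ltn_ord c) (ltn_ord a1) (ltn_ord a2) U).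
Qed.

Unset Implicit Arguments.

Theorem lemma3p1 (R : realType) (m n : nat) (e : rel 'I_n) (lam : R)
  (x : 'cV[R]_n) (ustar : 'I_n) :
  (88 <= m)%N ->
  in_GmF6 m e ->
  spectral_radius e lam ->
  (forall (n' : nat) (e' : rel 'I_n') (mu : R),
      in_GmF6 m e' -> spectral_radius e' mu -> mu <= lam) ->
  perron_vector e lam x ->
  (forall v, x v 0 <= x ustar 0) ->
  (4 <= edges_in e (nbhd e ustar))%N /\
  (exists v w, [/\ v \in nbhd e ustar, w \in nbhd e ustar & e v w]).
Proof.
move=> Hm Hin Hsr Hmax [Hx xpos _] xmaxv.
have [Hs He _ _] := Hin.
pose k := (m - 1)./2.
pose p := odd (m - 1).
have Em : m = (2 * k + 1 + p)%N.
  have := odd_double_half (m - 1); rewrite -/k -/p -muln2; lia.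
have k43 : (43 <= k)%N by lia.
pose s : R := Num.sqrt (8 * k + 1)%:R.
have s0 : 0 <= s by apply: sqrtr_ge0.
have ss : s * s = 8 * k%:R + 1.
  by rewrite -expr2 sqr_sqrtr ?ler0n // natrD natrM.
pose mu : R := (1 + s) / 2.
have Hmu : mu * mu = mu + 2 *+ k.
  rewrite -[2 *+ k]mulr_natr.
  have -> : mu * mu = mu + (s * s - 1) / 4.
    by rewrite /mu; field.
  by rewrite ss; field.
have kR : 43 <= (k%:R : R) by rewrite (ler_nat R 43 k).
have s9 : 9 < s by nra.
have mu5 : 5 < mu by rewrite /mu; lra.
have mulam : mu <= lam.
  apply: (Hmax _ (bkg k p) mu); first by rewrite Em; exact: bk_in.
  by apply: bk_spec => //; lra.
have L1 := lam_sq_bound Hx xpos xmaxv.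
have L2 := deg_bound ustar Hs.
rewrite He in L2.
have L3 : lam ^+ 2 <= (m + edges_in e (nbhd e ustar))%:R.
  by apply: (le_trans L1); rewrite ler_nat.
have H4 : (4 <= edges_in e (nbhd e ustar))%N.
  rewrite leqNgt; apply/negP => H3.
  have : (m + edges_in e (nbhd e ustar) <= 2 * k + 5)%N by move: H3; rewrite Em; case: (p); lia.
  rewrite -(ler_nat R) => H5.
  have H6 := le_trans L3 H5.
  move: H6; rewrite natrD natrM /= => H6.
  have : mu * mu <= lam ^+ 2 by rewrite expr2; nra.
  rewrite Hmu -mulr_natr => H7.
  have : mu <= 5 by lra.
  by rewrite leNgt mu5.
split => //.
have : (0 < edges_in e (nbhd e ustar))%N by lia.
rewrite /edges_in => /card_gt0P [[v w]]; rewrite !inE /= => /and4P [Hv Hw Hvw _].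
by exists v, w; rewrite !inE.
Qed.
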